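(* Let $r\ge2$ be an integer. The following four families span the same (finite-dimensional) linear space of functions on $\mathcal G_H$: (1) $\psi^{0,H}_{r-2p,-p}$ for $1\le p\le\lfloor r/2\rfloor$; (2) $I_{r-2p,2p}$ for $1\le p\le\lfloor r/2\rfloor$; (3) $\xi^{2p}w^{r-2p}$ for $1\le p\le\lfloor r/2\rfloor$; (4) $\xi^2w^{r-2p}(w^2-4\xi^2)^{p-1}$ for $1\le p\le\lfloor r/2\rfloor$.
   Context: $\mathcal G_H=\mathbb R/2\pi\mathbb Z\times\mathbb R$ parametrizes unit-speed geodesics of the Poincaré disk ($\{|z|<1\}$, metric $4|dz|^2/(1-|z|^2)^2$) by $z_{\beta,a}(t)=e^{i\beta}\frac{(2+ia)\tanh(t/2)+ia}{ia\tanh(t/2)-2+ia}$. $I_{p,q}(\beta,a)=\int_{\mathbb R}z_{\beta,a}(t)^p\dot z_{\beta,a}(t)^qdt$. With $\omega=\beta+\tan^{-1}a+\pi/2$ and $\mu_H=(1+a^2)^{-1/2}$: $w=-a\mu_He^{i\omega}$, $\xi=\frac i2\mu_He^{i\omega}$. For $n\in\mathbb N_0$, $k\in\mathbb Z$, $\psi^{0,H}_{n,k}(\beta,a)=\mu_H^2e^{i(n-2k)\omega}p_n\!\big(a/\sqrt{1+a^2}\big)$, where $p_n$ is the multiple of the Jacobi polynomial $P_n^{(1/2,1/2)}$ (equivalently of the Chebyshev polynomial $U_n$) normalized by $\int_{-1}^1p_n(t)^2(1-t^2)^{1/2}dt=(2\pi)^{-1}$. *)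

(* Defs.v *)
From Stdlib Require Import Reals.
From Coquelicot Require Import Coquelicot.
Open Scope R_scope.

Definition tanhR (x : R) : R := (exp x - exp (- x)) / (exp x + exp (- x)).

Definition eiC (th : R) : C := (cos th, sin th).

Fixpoint Csum1 (f : nat -> C) (m : nat) : C :=
  match m with O => RtoC 0 | S k => Cplus (Csum1 f k) (f (S k)) end.

(* unit-speed geodesics z_{beta,a}(t) of the Poincare disk *)
Definition zH (beta a t : R) : C :=
  Cmult (eiC beta)
    (Cdiv (Cplus (Cmult (2, a) (RtoC (tanhR (t / 2)))) (0, a))
          (Cplus (Cmult (0, a) (RtoC (tanhR (t / 2)))) (-2, a))).

Definition zHdot (beta a t : R) : C :=
  (Derive (fun s => fst (zH beta a s)) t, Derive (fun s => snd (zH beta a s)) t).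

Definition IH (p q : nat) (beta a : R) : C :=
  (RInt_gen (fun t => fst (Cmult (Cpow (zH beta a t) p) (Cpow (zHdot beta a t) q)))
            (Rbar_locally m_infty) (Rbar_locally p_infty),
   RInt_gen (fun t => snd (Cmult (Cpow (zH beta a t) p) (Cpow (zHdot beta a t) q)))
            (Rbar_locally m_infty) (Rbar_locally p_infty)).

Definition omegaH (beta a : R) : R := beta + atan a + PI / 2.
Definition muH (a : R) : R := / sqrt (1 + a ^ 2).
Definition wH (beta a : R) : C := Cmult (RtoC (- a * muH a)) (eiC (omegaH beta a)).
Definition xiH (beta a : R) : C := Cmult (0, / 2 * muH a) (eiC (omegaH beta a)).

Fixpoint chebU (n : nat) (t : R) : R :=
  match n with
  | O => 1
  | S O => 2 * t
  | S ((S m) as k) => 2 * t * chebU k t - chebU m t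
  end.

(* pn is "the" normalized multiple of U_n (determined up to sign) *)
Definition normalized_cheb (pn : nat -> R -> R) : Prop :=
  forall n, (exists c : R, forall t, pn n t = c * chebU n t) /\
    RInt (fun t => (pn n t) ^ 2 * sqrt (1 - t ^ 2)) (-1) 1 = / (2 * PI).

Definition psi0H (pn : nat -> R -> R) (n : nat) (k : Z) (beta a : R) : C :=
  Cmult (RtoC (muH a ^ 2))
    (Cmult (eiC ((INR n - 2 * IZR k) * omegaH beta a))
           (RtoC (pn n (a / sqrt (1 + a ^ 2))))).

Definition in_span (fam : nat -> R -> R -> C) (m : nat) (f : R -> R -> C) : Prop :=
  exists c : nat -> C, forall beta a, f beta a = Csum1 (fun p => Cmult (c p) (fam p beta a)) m.

(* Main.v *)
Require Import Defs.
From Stdlib Require Import Reals.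
From Coquelicot Require Import Coquelicot.
From Stdlib Require Import Lia Lra FunctionalExtensionality.
Open Scope R_scope.

Lemma Csum1_ext f g m : (forall k, (1 <= k <= m)%nat -> f k = g k) -> Csum1 f m = Csum1 g m.
Proof. induction m; simpl; intros H; auto. rewrite IHm by (intros; apply H; lia). rewrite (H (S m)) by lia; auto. Qed.

Lemma Csum1_plus f g m : Csum1 (fun k => Cplus (f k) (g k)) m = Cplus (Csum1 f m) (Csum1 g m).
Proof. induction m; simpl. apply injective_projections; simpl; ring. rewrite IHm. ring. Qed.

Lemma Csum1_scal s f m : Csum1 (fun k => Cmult s (f k)) m = Cmult s (Csum1 f m).
Proof. induction m; simpl. apply injective_projections; simpl; ring. rewrite IHm. ring. Qed.

Lemma Csum1_zero m : Csum1 (fun _ => RtoC 0) m = RtoC 0.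
Proof. induction m; simpl; auto. rewrite IHm. ring. Qed.

Lemma Csum1_single (g : nat -> C) k m : (1 <= k <= m)%nat ->
  Csum1 (fun j => if Nat.eq_dec j k then g j else RtoC 0) m = g k.
Proof.
  induction m; intros H; [lia|]. cbn [Csum1].
  destruct (Nat.eq_dec (S m) k).
  - subst. rewrite (Csum1_ext _ (fun _ => RtoC 0)). rewrite Csum1_zero. ring.
    intros j Hj. destruct (Nat.eq_dec j (S m)); auto; lia.
  - rewrite IHm by lia. ring.
Qed.

Section Span.
Context {X : Type}.

Definition spanR (F : nat -> X -> C) (lo hi : nat) (f : X -> C) : Prop :=
  exists c : nat -> C, (forall k, (k < lo)%nat -> c k = RtoC 0) /\
    forall x, f x = Csum1 (fun k => Cmult (c k) (F k x)) hi.

Lemma span_ext F lo hi f g : (forall x, f x = g x) -> spanR F lo hi f -> spanR F lo hi g.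
Proof. intros H [c [H1 H2]]. exists c; split; auto. intros x; rewrite <- H; auto. Qed.

Lemma span_zero F lo hi : spanR F lo hi (fun _ => RtoC 0).
Proof. exists (fun _ => RtoC 0); split; auto. intros x.
  rewrite (Csum1_ext _ (fun _ => RtoC 0)); [rewrite Csum1_zero; auto|]. intros; ring. Qed.

Lemma span_add F lo hi f g : spanR F lo hi f -> spanR F lo hi g -> spanR F lo hi (fun x => Cplus (f x) (g x)).
Proof. intros [c [H1 H2]] [d [H3 H4]]. exists (fun k => Cplus (c k) (d k)); split.
  intros k Hk; rewrite H1, H3 by auto; ring.
  intros x. rewrite H2, H4, <- Csum1_plus. apply Csum1_ext; intros; ring. Qed.

Lemma span_scal F lo hi s f : spanR F lo hi f -> spanR F lo hi (fun x => Cmult s (f x)).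
Proof. intros [c [H1 H2]]. exists (fun k => Cmult s (c k)); split.
  intros k Hk; rewrite H1 by auto; ring.
  intros x. rewrite H2, <- Csum1_scal. apply Csum1_ext; intros; ring. Qed.

Lemma span_gen F lo hi k : (lo <= k <= hi)%nat -> (1 <= k)%nat -> spanR F lo hi (F k).
Proof. intros H H'. exists (fun j => if Nat.eq_dec j k then RtoC 1 else RtoC 0); split.
  intros j Hj. destruct (Nat.eq_dec j k); auto; lia.
  intros x. rewrite (Csum1_ext _ (fun j => if Nat.eq_dec j k then Cmult (RtoC 1) (F j x) else RtoC 0)).
  rewrite Csum1_single by lia. ring.
  intros j _. destruct (Nat.eq_dec j k); auto. ring. Qed.

Lemma span_trans F G lo hi lo' hi' f : spanR F lo hi f ->
  (forall k, (lo <= k <= hi)%nat -> (1 <= k)%nat -> spanR G lo' hi' (F k)) -> spanR G lo' hi' f.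
Proof.
  intros [c [H1 H2]] HF. apply (span_ext _ _ _ (fun x => Csum1 (fun k => Cmult (c k) (F k x)) hi)).
  intros; auto.
  assert (forall N, (N <= hi)%nat -> spanR G lo' hi' (fun x => Csum1 (fun k => Cmult (c k) (F k x)) N)).
  { induction N; intros HN; simpl. apply span_zero.
    apply span_add. apply IHN; lia.
    destruct (Nat.lt_ge_cases (S N) lo).
    - rewrite H1 by auto. apply (span_ext _ _ _ (fun _ => RtoC 0)). intros; ring. apply span_zero.
    - apply span_scal. apply HF; lia. }
  apply H; lia.
Qed.

Lemma span_mono F lo hi lo' hi' f : (lo' <= lo)%nat -> (hi <= hi')%nat -> spanR F lo hi f -> spanR F lo' hi' f.
Proof. intros H1 H2 H. apply (span_trans _ _ _ _ _ _ _ H). intros; apply span_gen; lia. Qed.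

Fixpoint Csum0 (f : nat -> C) (n : nat) : C :=
  match n with O => f O | S k => Cplus (Csum0 f k) (f (S k)) end.

Lemma span_sum0 F lo hi (h : nat -> X -> C) N : (forall j, (j <= N)%nat -> spanR F lo hi (h j)) ->
  spanR F lo hi (fun x => Csum0 (fun j => h j x) N).
Proof. induction N; intros H; simpl. apply H; lia. apply span_add. apply IHN; intros; apply H; lia. apply H; lia. Qed.

Lemma span_sum1 F lo hi (h : nat -> X -> C) N : (forall j, (1 <= j <= N)%nat -> spanR F lo hi (h j)) ->
  spanR F lo hi (fun x => Csum1 (fun j => h j x) N).
Proof. induction N; intros H; simpl. apply span_zero. apply span_add. apply IHN; intros; apply H; lia. apply H; lia. Qed.

End Span.

Lemma span_mul {X} (F : nat -> X -> C) lo hi (h : X -> C) f : spanR F lo hi f ->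
  spanR (fun k x => Cmult (h x) (F k x)) lo hi (fun x => Cmult (h x) (f x)).
Proof. intros [c [H1 H2]]. exists c; split; auto. intros x. rewrite H2, <- Csum1_scal.
  apply Csum1_ext; intros; ring. Qed.

Lemma span_comp {X Y} (F : nat -> X -> C) lo hi (g : Y -> X) f : spanR F lo hi f ->
  spanR (fun k y => F k (g y)) lo hi (fun y => f (g y)).
Proof. intros [c [H1 H2]]. exists c; split; auto. Qed.

Section Tri.
Context {X : Type}.
Variables (F G : nat -> X -> C) (m : nat).

Lemma tri_lower : (forall p, (1 <= p <= m)%nat -> exists d, d <> RtoC 0 /\
     spanR F 1 (p - 1) (fun x => Cminus (G p x) (Cmult d (F p x)))) ->
  forall p, (1 <= p <= m)%nat -> spanR G 1 p (F p).
Proof.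
  intros H p. induction p as [p IH] using (well_founded_induction Wf_nat.lt_wf). intros Hp.
  destruct (H p Hp) as [d [Hd HR]].
  apply (span_ext _ _ _ (fun x => Cmult (/ d) (Cminus (G p x) (Cminus (G p x) (Cmult d (F p x)))))).
  intros x. field. auto.
  apply span_scal. apply (span_ext _ _ _ (fun x => Cplus (G p x) (Cmult (RtoC (-1)) (Cminus (G p x) (Cmult d (F p x)))))).
  intros; ring.
  apply span_add. apply span_gen; lia. apply span_scal.
  apply (span_trans _ _ _ _ _ _ _ HR). intros k Hk _. apply (span_mono _ 1 k). lia. lia. apply IH; lia.
Qed.

Lemma tri_upper : (forall p, (1 <= p <= m)%nat -> exists d, d <> RtoC 0 /\
     spanR F (S p) m (fun x => Cminus (G p x) (Cmult d (F p x)))) ->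
  forall p, (1 <= p <= m)%nat -> spanR G p m (F p).
Proof.
  intros H.
  assert (forall k p, (p + k = m)%nat -> (1 <= p <= m)%nat -> spanR G p m (F p)).
  { intros k. induction k as [k IH] using (well_founded_induction Wf_nat.lt_wf). intros p Hk Hp.
  destruct (H p Hp) as [d [Hd HR]].
  apply (span_ext _ _ _ (fun x => Cmult (/ d) (Cminus (G p x) (Cminus (G p x) (Cmult d (F p x)))))).
  intros x. field. auto.
  apply span_scal. apply (span_ext _ _ _ (fun x => Cplus (G p x) (Cmult (RtoC (-1)) (Cminus (G p x) (Cmult d (F p x)))))).
  intros; ring.
  apply span_add. apply span_gen; lia. apply span_scal.
  apply (span_trans _ _ _ _ _ _ _ HR). intros j Hj _. apply (span_mono _ j m). lia. lia.
  apply (IH (m - j)%nat); lia. }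
  intros p Hp. apply (H0 (m - p)%nat); lia.
Qed.

End Tri.

Lemma span_fam_ext {X} (F F' : nat -> X -> C) lo hi f : (forall k x, F k x = F' k x) ->
  spanR F lo hi f -> spanR F' lo hi f.
Proof. intros H [c [H1 H2]]. exists c; split; auto. intros x; rewrite H2. apply Csum1_ext; intros; rewrite H; auto. Qed.

Lemma in_span_spanR (F : nat -> R -> R -> C) m f :
  in_span F m f <-> spanR (fun k x => F k (fst x) (snd x)) 1 m (fun x => f (fst x) (snd x)).
Proof. split.
  - intros [c Hc]. exists (fun k => match k with O => RtoC 0 | _ => c k end); split.
    intros k Hk; destruct k; auto; lia.
    intros [b a]. simpl. rewrite Hc. apply Csum1_ext. intros k Hk. destruct k; auto; lia.
  - intros [c [_ Hc]]. exists c. intros b a. apply (Hc (b, a)).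
Qed.

Lemma span_equiv (F G : nat -> R -> R -> C) m :
  (forall p, (1 <= p <= m)%nat -> spanR (fun k x => G k (fst x) (snd x)) 1 m (fun x => F p (fst x) (snd x))) ->
  (forall p, (1 <= p <= m)%nat -> spanR (fun k x => F k (fst x) (snd x)) 1 m (fun x => G p (fst x) (snd x))) ->
  forall f, in_span F m f <-> in_span G m f.
Proof. intros H1 H2 f. rewrite !in_span_spanR. split; intros H.
  apply (span_trans _ _ _ _ _ _ _ H). intros; apply H1; lia.
  apply (span_trans _ _ _ _ _ _ _ H). intros; apply H2; lia. Qed.

Lemma div2_facts r : (2 * (Nat.div r 2) <= r /\ r <= 2 * (Nat.div r 2) + 1)%nat.
Proof. pose proof (Nat.div_mod r 2). pose proof (Nat.mod_upper_bound r 2). lia. Qed.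

Lemma RtoC_plus x y : RtoC (x + y) = Cplus (RtoC x) (RtoC y).
Proof. apply injective_projections; simpl; ring. Qed.
Lemma RtoC_mult x y : RtoC (x * y) = Cmult (RtoC x) (RtoC y).
Proof. apply injective_projections; simpl; ring. Qed.
Lemma RtoC_minus x y : RtoC (x - y) = Cminus (RtoC x) (RtoC y).
Proof. apply injective_projections; simpl; ring. Qed.

Lemma chebU_rec4 n t : chebU (S (S (S (S n)))) t = (4 * t^2 - 2) * chebU (S (S n)) t - chebU n t.
Proof.
  assert (H2 : chebU (S (S n)) t = 2 * t * chebU (S n) t - chebU n t) by (destruct n; reflexivity).
  assert (H4 : chebU (S (S (S (S n)))) t = 2 * t * chebU (S (S (S n))) t - chebU (S (S n)) t) by reflexivity.
  assert (H3 : chebU (S (S (S n))) t = 2 * t * chebU (S (S n)) t - chebU (S n) t) by reflexivity.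
  rewrite H4, H3.
  assert (Hb : 2 * t * chebU (S n) t = chebU (S (S n)) t + chebU n t) by (rewrite H2; ring).
  replace (2 * t * (2 * t * chebU (S (S n)) t - chebU (S n) t) - chebU (S (S n)) t)
    with (4 * t^2 * chebU (S (S n)) t - (2 * t * chebU (S n) t) - chebU (S (S n)) t) by ring.
  rewrite Hb. ring.
Qed.

Section RealSide.
Variable r : nat.
Let m := Nat.div r 2.

Definition tmon (k : nat) (t : R) : C := RtoC (t ^ (r - 2 * k)).

Lemma cheb_span : forall p, (p <= m)%nat ->
  spanR tmon (S p) m (fun t => RtoC (chebU (r - 2 * p) t - 2 ^ (r - 2 * p) * t ^ (r - 2 * p))).
Proof.
  pose proof (div2_facts r) as Hd. fold m in Hd.
  assert (forall j p, (p + j = m)%nat -> spanR tmon (S p) m (fun t => RtoC (chebU (r - 2 * p) t - 2 ^ (r - 2 * p) * t ^ (r - 2 * p)))).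
  { intros j. induction j as [j IH] using (well_founded_induction Wf_nat.lt_wf). intros p Hp.
    destruct j as [|[|j]].
    -
      apply (span_ext _ _ _ (fun _ => RtoC 0)); [|apply span_zero].
      intros t. f_equal. destruct (r - 2 * p)%nat as [|[|k]] eqn:E; simpl; try ring; lia.
    -
      destruct (r - 2 * p)%nat as [|[|[|[|k]]]] eqn:E; try lia.
      + apply (span_ext _ _ _ (fun t => Cmult (RtoC (-1)) (tmon m t))).
        intros t. unfold tmon. replace (r - 2 * m)%nat with 0%nat by lia. rewrite <- RtoC_mult. f_equal. simpl. ring.
        apply span_scal, span_gen; lia.
      + apply (span_ext _ _ _ (fun t => Cmult (RtoC (-4)) (tmon m t))).
        intros t. unfold tmon. replace (r - 2 * m)%nat with 1%nat by lia. rewrite <- RtoC_mult. f_equal. simpl. ring.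
        apply span_scal, span_gen; lia.
    - set (n := (r - 2 * p - 4)%nat).
      assert (E : (r - 2 * p = S (S (S (S n))))%nat) by (unfold n; lia).
      assert (E1 : (r - 2 * (p + 1) = S (S n))%nat) by (unfold n; lia).
      assert (E2 : (r - 2 * (p + 2) = n)%nat) by (unfold n; lia).
      pose proof (IH (S j) ltac:(lia) (p + 1)%nat ltac:(lia)) as H1.
      pose proof (IH j ltac:(lia) (p + 2)%nat ltac:(lia)) as H2.
      rewrite E1 in H1. rewrite E2 in H2. rewrite E.
      set (R1 := fun t => RtoC (chebU (S (S n)) t - 2 ^ S (S n) * t ^ S (S n))) in H1.
      set (R2 := fun t => RtoC (chebU n t - 2 ^ n * t ^ n)) in H2.
      apply (span_ext _ _ _ (fun t => Cplus (Cmult (RtoC 4) (Cmult (RtoC (t^2)) (R1 t)))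
         (Cplus (Cmult (RtoC (-2)) (R1 t)) (Cplus (Cmult (RtoC (- 2 * 2 ^ S (S n))) (tmon (p+1) t))
           (Cplus (Cmult (RtoC (- 2 ^ n)) (tmon (p+2) t)) (Cmult (RtoC (-1)) (R2 t))))))).
      { intros t. unfold R1, R2, tmon. rewrite E1, E2. rewrite chebU_rec4.
        rewrite <- !RtoC_mult, <- !RtoC_plus. f_equal. simpl. ring. }
      apply span_add; [|apply span_add; [|apply span_add; [|apply span_add]]].
      + apply span_scal. eapply span_trans; [apply (span_mul tmon _ _ (fun t => RtoC (t^2)) _ H1)|].
        intros k Hk _. simpl. apply (span_ext _ _ _ (tmon (k - 1))).
        intros t. unfold tmon. rewrite <- RtoC_mult. f_equal. replace (r - 2 * (k - 1))%nat with (2 + (r - 2 * k))%nat by lia. rewrite pow_add. ring.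
        apply span_gen; lia.
      + apply span_scal. eapply span_mono; [| |exact H1]; lia.
      + apply span_scal, span_gen; lia.
      + apply span_scal, span_gen; lia.
      + apply span_scal. eapply span_mono; [| |exact H2]; lia. }
  intros p Hp. apply (H (m - p)%nat); lia.
Qed.

End RealSide.

Lemma RtoC_sum (f : nat -> R) n : RtoC (sum_f_R0 f n) = Csum0 (fun i => RtoC (f i)) n.
Proof. induction n; simpl; auto. rewrite RtoC_plus, IHn. auto. Qed.

Lemma sum_mult_lr a b f n : a * sum_f_R0 f n * b = sum_f_R0 (fun i => a * f i * b) n.
Proof. induction n; simpl; auto. rewrite <- IHn. ring. Qed.

Lemma Cn0 n : Binomial.C n 0 = 1.
Proof. unfold Binomial.C. replace (n - 0)%nat with n by lia. simpl. field. apply INR_fact_neq_0. Qed.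

Lemma Csum0_RtoCm (a b : nat -> R) n : Csum0 (fun i => Cmult (RtoC (a i)) (RtoC (b i))) n = RtoC (sum_f_R0 (fun i => a i * b i) n).
Proof. induction n; simpl. rewrite RtoC_mult; auto. rewrite IHn, RtoC_plus, RtoC_mult. auto. Qed.

Section RealSide2.
Variable r : nat.
Let m := Nat.div r 2.

Definition mon (k : nat) (t : R) : C := RtoC ((1 - t^2) * t ^ (r - 2 * k)).
Definition f3r (k : nat) (t : R) : C := RtoC ((-1/4)^k * (1 - t^2)^k * (- t) ^ (r - 2 * k)).
Definition f4r (k : nat) (t : R) : C := RtoC (-1/4 * (1 - t^2) * (- t) ^ (r - 2 * k)).

Lemma negpow t n : (- t) ^ n = (-1) ^ n * t ^ n.
Proof. rewrite <- Rpow_mult_distr. f_equal. ring. Qed.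

Lemma f3_tri : forall k, (1 <= k <= m)%nat -> exists d, d <> RtoC 0 /\
   spanR mon 1 (k - 1) (fun t => Cminus (f3r k t) (Cmult d (mon k t))).
Proof.
  pose proof (div2_facts r) as Hd. fold m in Hd.
  intros k Hk. exists (RtoC ((-1/4)^k * (-1)^(r - 2 * k))). split.
  { intros H. apply (f_equal fst) in H. simpl in H. apply Rmult_integral in H.
    destruct H as [H|H]; apply pow_nonzero in H; auto; lra. }
  destruct k as [|k]; [lia|].
  destruct k as [|k].
  - apply (span_ext _ _ _ (fun _ => RtoC 0)); [|apply span_zero].
    intros t. unfold f3r, mon. rewrite <- RtoC_mult, <- RtoC_minus. f_equal. rewrite negpow. simpl. ring.
  - apply (span_ext _ _ _ (fun t => Csum0 (fun i => Cmult (RtoC ((-1/4)^(S (S k)) * (-1)^(r - 2 * S (S k))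
         * Binomial.C (S k) (S i) * (-1) ^ (S i))) (mon (S (S k) - S i) t)) k)).
    { intros t. unfold f3r, mon.
      assert (HB : (1 - t^2) ^ S k = sum_f_R0 (fun i => Binomial.C (S k) i * (- t^2) ^ i * 1 ^ (S k - i)) (S k)).
      { rewrite <- binomial. f_equal. ring. }
      rewrite decomp_sum in HB by lia. simpl pred in HB.
      replace ((1 - t ^ 2) ^ S (S k)) with ((1 - t^2) * (1 - t ^ 2) ^ S k) by (simpl; ring).
      rewrite HB. rewrite <- RtoC_mult, <- RtoC_minus.
      replace (sum_f_R0 (fun i => Binomial.C (S k) (S i) * (- t ^ 2) ^ S i * 1 ^ (S k - S i)) k) with
       (sum_f_R0 (fun i => Binomial.C (S k) (S i) * (-1) ^ S i * t ^ (2 * S i)) k).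
      2:{ apply sum_eq. intros i _. rewrite pow1, negpow, pow_mult. ring. }
      assert (E : forall (a b : R), a * sum_f_R0 (fun i => Binomial.C (S k) (S i) * (-1) ^ S i * t ^ (2 * S i)) k * b
          = sum_f_R0 (fun i => a * (Binomial.C (S k) (S i) * (-1) ^ S i * t ^ (2 * S i)) * b) k).
      { intros a b. apply sum_mult_lr. }
      rewrite Csum0_RtoCm. f_equal. rewrite (negpow t (r - 2 * S (S k))), Cn0, pow1.
      transitivity (sum_f_R0 (fun i => ((-1/4)^(S (S k)) * (-1)^(r - 2 * S (S k)) * (1 - t^2) * t^(r - 2 * S (S k)))
          * (Binomial.C (S k) (S i) * (-1) ^ S i * t ^ (2 * S i)) * 1) k).
      - apply sum_eq. intros i Hi.
        replace (r - 2 * (S (S k) - S i))%nat with (2 * S i + (r - 2 * S (S k)))%nat by lia.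
        rewrite pow_add. ring.
      - rewrite <- E. simpl. ring. }
    apply span_sum0. intros i Hi. apply span_scal. apply span_gen; lia.
Qed.

Lemma f4_diag : forall k, (1 <= k <= m)%nat -> exists d, d <> RtoC 0 /\
   spanR mon 1 (k - 1) (fun t => Cminus (f4r k t) (Cmult d (mon k t))).
Proof.
  intros k Hk. exists (RtoC (-1/4 * (-1)^(r - 2 * k))). split.
  { intros H. apply (f_equal fst) in H. simpl in H. apply Rmult_integral in H.
    destruct H as [H|H]; [lra|]. apply pow_nonzero in H; auto; lra. }
  apply (span_ext _ _ _ (fun _ => RtoC 0)); [|apply span_zero].
  intros t. unfold f4r, mon. rewrite <- RtoC_mult, <- RtoC_minus. f_equal. rewrite negpow. ring.
Qed.

Lemma f1_tri (pn : nat -> R -> R) : normalized_cheb pn -> forall p, (1 <= p <= m)%nat -> exists d, d <> RtoC 0 /\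
   spanR mon (S p) m (fun t => Cminus (RtoC ((1 - t^2) * pn (r - 2 * p)%nat t)) (Cmult d (mon p t))).
Proof.
  intros Hn p Hp. destruct (Hn (r - 2 * p)%nat) as [[c Hc] Hint].
  assert (Hc0 : c <> 0).
  { intros ->. rewrite (RInt_ext _ (fun _ => 0)) in Hint.
    rewrite RInt_const in Hint. unfold scal, zero in Hint; simpl in Hint. unfold mult in Hint; simpl in Hint.
    assert (0 < PI) by apply PI_RGT_0.
    rewrite Rmult_0_r in Hint. symmetry in Hint. apply Rinv_neq_0_compat in Hint; auto. lra.
    intros x _. rewrite Hc. simpl. ring. }
  exists (RtoC (c * 2 ^ (r - 2 * p))). split.
  { intros H. apply (f_equal fst) in H. simpl in H. apply Rmult_integral in H.
    destruct H as [H|H]; auto. apply pow_nonzero in H; auto; lra. }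
  pose proof (cheb_span r p ltac:(unfold m in Hp; lia)) as H.
  apply (span_mul _ _ _ (fun t => RtoC (1 - t^2))) in H.
  apply (span_fam_ext _ (mon)) in H.
  2:{ intros k t. unfold tmon, mon. rewrite RtoC_mult. auto. }
  apply (span_scal _ _ _ (RtoC c)) in H.
  eapply span_ext; [|exact H].
  intros t. cbv beta. rewrite Hc. unfold mon. rewrite <- !RtoC_mult, <- RtoC_minus. f_equal. ring.
Qed.


End RealSide2.

Definition Ev (r : nat) (b a : R) : C := Cpow (eiC (omegaH b a)) r.
Definition ttH (a : R) : R := a * muH a.
Definition Gf (r k : nat) (b a : R) : C := Cmult (Ev r b a) (mon r k (ttH a)).

Lemma transfer r (phi : R -> C) lo hi : spanR (mon r) lo hi phi ->
  spanR (fun k x => Gf r k (fst x) (snd x)) lo hi (fun x => Cmult (Ev r (fst x) (snd x)) (phi (ttH (snd x)))).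
Proof. intros H. apply (span_comp _ _ _ (fun x : R * R => ttH (snd x))) in H.
  apply (span_mul _ _ _ (fun x => Ev r (fst x) (snd x))) in H. exact H. Qed.

Lemma equiv_lower r (F : nat -> R -> R -> C) (phi : nat -> R -> C) :
  let m := Nat.div r 2 in
  (forall k b a, (1 <= k <= m)%nat -> F k b a = Cmult (Ev r b a) (phi k (ttH a))) ->
  (forall k, (1 <= k <= m)%nat -> exists d, d <> RtoC 0 /\
     spanR (mon r) 1 (k - 1) (fun t => Cminus (phi k t) (Cmult d (mon r k t)))) ->
  forall f, in_span F m f <-> in_span (Gf r) m f.
Proof.
  intros m HF Htri.
  assert (H : forall k, (1 <= k <= m)%nat -> exists d, d <> RtoC 0 /\
     spanR (fun k x => Gf r k (fst x) (snd x)) 1 (k - 1) (fun x => Cminus (F k (fst x) (snd x)) (Cmult d (Gf r k (fst x) (snd x))))).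
  { intros k Hk. destruct (Htri k Hk) as [d [Hd Hs]]. exists d; split; auto.
    apply transfer in Hs. eapply span_ext; [|exact Hs]. intros x. cbv beta. rewrite HF by lia. unfold Gf. ring. }
  apply span_equiv.
  - intros p Hp. destruct (H p Hp) as [d [Hd Hs]].
    apply (span_ext _ _ _ (fun x => Cplus (Cminus (F p (fst x) (snd x)) (Cmult d (Gf r p (fst x) (snd x))))
        (Cmult d (Gf r p (fst x) (snd x))))). intros; ring.
    apply span_add. eapply span_mono; [| |exact Hs]; lia. apply span_scal. apply (span_gen (fun k x => Gf r k (fst x) (snd x))); lia.
  - intros p Hp. eapply span_mono; [| |apply (tri_lower _ _ m H p Hp)]; lia.
Qed.

Lemma equiv_upper r (F : nat -> R -> R -> C) (phi : nat -> R -> C) :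
  let m := Nat.div r 2 in
  (forall k b a, (1 <= k <= m)%nat -> F k b a = Cmult (Ev r b a) (phi k (ttH a))) ->
  (forall k, (1 <= k <= m)%nat -> exists d, d <> RtoC 0 /\
     spanR (mon r) (S k) m (fun t => Cminus (phi k t) (Cmult d (mon r k t)))) ->
  forall f, in_span F m f <-> in_span (Gf r) m f.
Proof.
  intros m HF Htri.
  assert (H : forall k, (1 <= k <= m)%nat -> exists d, d <> RtoC 0 /\
     spanR (fun k x => Gf r k (fst x) (snd x)) (S k) m (fun x => Cminus (F k (fst x) (snd x)) (Cmult d (Gf r k (fst x) (snd x))))).
  { intros k Hk. destruct (Htri k Hk) as [d [Hd Hs]]. exists d; split; auto.
    apply transfer in Hs. eapply span_ext; [|exact Hs]. intros x. cbv beta. rewrite HF by lia. unfold Gf. ring. }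
  apply span_equiv.
  - intros p Hp. destruct (H p Hp) as [d [Hd Hs]].
    apply (span_ext _ _ _ (fun x => Cplus (Cminus (F p (fst x) (snd x)) (Cmult d (Gf r p (fst x) (snd x))))
        (Cmult d (Gf r p (fst x) (snd x))))). intros; ring.
    apply span_add. eapply span_mono; [| |exact Hs]; lia. apply span_scal. apply (span_gen (fun k x => Gf r k (fst x) (snd x))); lia.
  - intros p Hp. eapply span_mono; [| |apply (tri_upper _ _ m H p Hp)]; lia.
Qed.

Lemma Cpow_add u a b : Cpow u (a + b) = Cmult (Cpow u a) (Cpow u b).
Proof. induction a; simpl. ring. rewrite IHa. ring. Qed.
Lemma Cpow_mult_distr u v n : Cpow (Cmult u v) n = Cmult (Cpow u n) (Cpow v n).
Proof. induction n; simpl. ring. rewrite IHn. ring. Qed.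
Lemma Cpow_RtoC x n : Cpow (RtoC x) n = RtoC (x ^ n).
Proof. induction n; simpl. auto. rewrite IHn, RtoC_mult. auto. Qed.
Lemma Cpow_mul_exp u a b : Cpow u (a * b) = Cpow (Cpow u a) b.
Proof. induction b. rewrite Nat.mul_0_r. auto. rewrite Nat.mul_succ_r, Cpow_add, IHb. simpl. ring. Qed.
Lemma eiC_add x y : eiC (x + y) = Cmult (eiC x) (eiC y).
Proof. unfold eiC. apply injective_projections; simpl; [rewrite cos_plus|rewrite sin_plus]; ring. Qed.
Lemma eiC_pow th n : Cpow (eiC th) n = eiC (INR n * th).
Proof. induction n. simpl. unfold eiC. rewrite Rmult_0_l, cos_0, sin_0. auto.
  simpl Cpow. rewrite IHn, <- eiC_add. f_equal. rewrite S_INR. ring. Qed.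

Lemma sqrt1a_pos a : 0 < sqrt (1 + a ^ 2).
Proof. apply sqrt_lt_R0. nra. Qed.
Lemma muH_sq a : muH a ^ 2 * (1 + a ^ 2) = 1.
Proof. unfold muH. pose proof (sqrt1a_pos a). pose proof (sqrt_sqrt (1 + a^2) ltac:(nra)).
  rewrite <- H0 at 2. field. lra. Qed.
Lemma one_minus_tt a : 1 - ttH a ^ 2 = muH a ^ 2.
Proof. pose proof (muH_sq a). unfold ttH. assert (0 < 1 + a^2) by nra.
  rewrite Rpow_mult_distr. set (u := muH a ^ 2) in *.
  apply (Rmult_eq_reg_r (1 + a^2)); [|lra].
  replace ((1 - a ^ 2 * u) * (1 + a ^ 2)) with (1 + a^2 - a^2 * (u * (1 + a^2))) by ring.
  rewrite H. lra. Qed.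

Section Fams.
Variable r : nat.

Lemma F3_form k b a : (2 * k <= r)%nat ->
  Cmult (Cpow (xiH b a) (2 * k)) (Cpow (wH b a) (r - 2 * k)) = Cmult (Ev r b a) (f3r r k (ttH a)).
Proof.
  intros Hk. unfold xiH, wH, Ev, f3r. set (e := eiC (omegaH b a)).
  rewrite !Cpow_mult_distr, Cpow_mul_exp, Cpow_RtoC.
  replace (Cpow (0, / 2 * muH a) 2) with (RtoC (- (muH a / 2) ^ 2)) by
    (apply injective_projections; simpl; field).
  rewrite Cpow_RtoC.
  replace (Cpow e r) with (Cmult (Cpow e (2 * k)) (Cpow e (r - 2 * k))) by (rewrite <- Cpow_add; f_equal; lia).
  rewrite one_minus_tt.
  replace ((- (muH a / 2) ^ 2) ^ k) with ((-1/4) ^ k * (muH a ^ 2) ^ k) by (rewrite <- Rpow_mult_distr; f_equal; field).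
  replace (- a * muH a) with (- ttH a) by (unfold ttH; ring).
  rewrite !RtoC_mult. ring.
Qed.

Lemma F4_form k b a : (1 <= k)%nat -> (2 * k <= r)%nat ->
  Cmult (Cpow (xiH b a) 2) (Cmult (Cpow (wH b a) (r - 2 * k))
    (Cpow (Cminus (Cpow (wH b a) 2) (Cmult (RtoC 4) (Cpow (xiH b a) 2))) (k - 1)))
  = Cmult (Ev r b a) (f4r r k (ttH a)).
Proof.
  intros Hk1 Hk. unfold xiH, wH, Ev, f4r. set (e := eiC (omegaH b a)).
  assert (Hd : Cminus (Cpow (Cmult (RtoC (- a * muH a)) e) 2) (Cmult (RtoC 4) (Cpow (Cmult (0, / 2 * muH a) e) 2))
     = Cpow e 2).
  { rewrite !Cpow_mult_distr.
    replace (Cpow (0, / 2 * muH a) 2) with (RtoC (- (muH a / 2) ^ 2)) by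
      (apply injective_projections; simpl; field).
    rewrite Cpow_RtoC. pose proof (muH_sq a).
    transitivity (Cmult (RtoC ((- a * muH a) ^ 2 - 4 * (- (muH a / 2) ^ 2))) (Cpow e 2)).
    rewrite RtoC_minus, !RtoC_mult. ring.
    replace ((- a * muH a) ^ 2 - 4 * - (muH a / 2) ^ 2) with 1 by nra. ring. }
  rewrite Hd. rewrite <- Cpow_mul_exp, !Cpow_mult_distr, !Cpow_RtoC.
  replace (Cpow (0, / 2 * muH a) 2) with (RtoC (- (muH a / 2) ^ 2)) by
      (apply injective_projections; simpl; field).
  replace (Cpow e r) with (Cmult (Cpow e 2) (Cmult (Cpow e (r - 2 * k)) (Cpow e (2 * (k - 1))))) by
    (rewrite <- !Cpow_add; f_equal; lia).
  rewrite one_minus_tt. replace (- a * muH a) with (- ttH a) by (unfold ttH; ring).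
  rewrite !RtoC_mult. replace (RtoC (- (muH a / 2) ^ 2)) with (Cmult (RtoC (-1/4)) (RtoC (muH a ^ 2))).
  ring. rewrite <- RtoC_mult. f_equal. field.
Qed.

Lemma F1_form (pn : nat -> R -> R) k b a : (2 * k <= r)%nat ->
  psi0H pn (r - 2 * k) (- Z.of_nat k) b a = Cmult (Ev r b a) (RtoC ((1 - ttH a ^ 2) * pn (r - 2 * k)%nat (ttH a))).
Proof.
  intros Hk. unfold psi0H, Ev. rewrite eiC_pow.
  replace (INR (r - 2 * k) - 2 * IZR (- Z.of_nat k)) with (INR r).
  rewrite one_minus_tt, RtoC_mult. unfold ttH, muH. unfold Rdiv. ring.
  rewrite minus_INR by lia. rewrite mult_INR, opp_IZR, <- INR_IZR_INZ. simpl. ring.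
Qed.

End Fams.

Lemma isd_eq (f : R -> R) (x l l' : R) : is_derive f x l -> l = l' -> is_derive f x l'.
Proof. intros H <-; auto. Qed.
Lemma Rd_mult (f g : R -> R) x df dg : is_derive f x df -> is_derive g x dg ->
  is_derive (fun t => f t * g t) x (df * g x + f x * dg).
Proof. intros H1 H2. apply (is_derive_mult f g x df dg H1 H2). intros; apply Rmult_comm. Qed.
Lemma Rd_plus (f g : R -> R) x df dg : is_derive f x df -> is_derive g x dg ->
  is_derive (fun t => f t + g t) x (df + dg).
Proof. intros H1 H2. apply (is_derive_plus f g x df dg H1 H2). Qed.
Lemma Rd_minus (f g : R -> R) x df dg : is_derive f x df -> is_derive g x dg ->
  is_derive (fun t => f t - g t) x (df - dg).
Proof. intros H1 H2. apply (is_derive_minus f g x df dg H1 H2). Qed.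
Lemma Rd_const (k : R) x : is_derive (fun _ => k) x 0.
Proof. apply (is_derive_const k x). Qed.

Definition Cder (f : R -> C) (t : R) (l : C) :=
  is_derive (fun s => fst (f s)) t (fst l) /\ is_derive (fun s => snd (f s)) t (snd l).

Lemma Cder_ext f g t l : (forall s, f s = g s) -> Cder f t l -> Cder g t l.
Proof. intros E [H1 H2]. split; eapply is_derive_ext; try eassumption; intros; simpl; rewrite E; auto. Qed.
Lemma Cder_eq f t l l' : Cder f t l -> l = l' -> Cder f t l'.
Proof. intros H <-; auto. Qed.

Lemma Cder_const (k : C) t : Cder (fun _ => k) t (RtoC 0).
Proof. split; simpl; apply Rd_const. Qed.
Lemma Cder_RtoC (phi : R -> R) t d : is_derive phi t d -> Cder (fun s => RtoC (phi s)) t (RtoC d).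
Proof. intros H. split; simpl; auto. apply Rd_const. Qed.
Lemma Cder_plus f g t df dg : Cder f t df -> Cder g t dg -> Cder (fun s => Cplus (f s) (g s)) t (Cplus df dg).
Proof. intros [H1 H2] [H3 H4]. split; simpl; apply Rd_plus; auto. Qed.
Lemma Cder_mult f g t df dg : Cder f t df -> Cder g t dg ->
  Cder (fun s => Cmult (f s) (g s)) t (Cplus (Cmult df (g t)) (Cmult (f t) dg)).
Proof. intros [H1 H2] [H3 H4]. split; simpl.
  - eapply isd_eq. apply Rd_minus; apply Rd_mult; eauto. cbv beta; ring.
  - eapply isd_eq. apply Rd_plus; apply Rd_mult; eauto. cbv beta; ring. Qed.
Lemma Cder_scal (k : C) f t df : Cder f t df -> Cder (fun s => Cmult k (f s)) t (Cmult k df).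
Proof. intros H. apply (Cder_eq _ _ (Cplus (Cmult (RtoC 0) (f t)) (Cmult k df))).
  apply (Cder_mult (fun _ => k)). apply Cder_const. exact H. ring. Qed.
Lemma Cder_minus f g t df dg : Cder f t df -> Cder g t dg -> Cder (fun s => Cminus (f s) (g s)) t (Cminus df dg).
Proof. intros H1 H2. apply (Cder_eq _ _ (Cplus df (Cmult (RtoC (-1)) dg))).
  eapply Cder_ext; [|apply Cder_plus; [exact H1| apply (Cder_scal (RtoC (-1))); exact H2]].
  intros; simpl; ring. ring. Qed.

Lemma C_neq0 (z : C) : z <> RtoC 0 -> fst z ^ 2 + snd z ^ 2 <> 0.
Proof. intros H E. apply H. destruct z as [x y]. simpl in E.
  assert (x = 0) by nra. assert (y = 0) by nra. subst. auto. Qed.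

Lemma Rd_sq2 (f1 f2 : R -> R) t d1 d2 : is_derive f1 t d1 -> is_derive f2 t d2 ->
  is_derive (fun s => f1 s ^ 2 + f2 s ^ 2) t (2 * f1 t * d1 + 2 * f2 t * d2).
Proof. intros H1 H2. eapply is_derive_ext. intros s. symmetry. instantiate (1 := fun s => f1 s * f1 s + f2 s * f2 s). simpl. ring.
  eapply isd_eq. apply Rd_plus; apply Rd_mult; eauto. ring. Qed.

Lemma sqnz x y : x*x+y*y <> 0 -> (x*x-y*y)*(x*x-y*y) + (x*y+y*x)*(x*y+y*x) <> 0 /\ x*x+y*y <> 0.
Proof. intros H. split; auto. replace ((x*x-y*y)*(x*x-y*y) + (x*y+y*x)*(x*y+y*x)) with ((x*x+y*y)*(x*x+y*y)) by ring.
  apply Rmult_integral_contrapositive_currified; auto. Qed.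

Lemma Cder_inv f t df : f t <> RtoC 0 -> Cder f t df ->
  Cder (fun s => Cinv (f s)) t (Copp (Cdiv df (Cmult (f t) (f t)))).
Proof. intros Hz [H1 H2]. pose proof (C_neq0 _ Hz) as Hn.
  pose proof (Rd_sq2 _ _ _ _ _ H1 H2) as HN. cbv beta in HN.
  split; simpl.
  - eapply isd_eq. apply is_derive_div. exact H1. exact HN. exact Hn.
    cbv beta in *. destruct (f t) as [x y]. destruct df as [dx dy]. simpl in *. field. apply sqnz. intro E; apply Hn; nra.
  - eapply isd_eq. apply is_derive_div. apply (is_derive_opp (fun s => snd (f s))). exact H2. exact HN. exact Hn.
    cbv beta in *. destruct (f t) as [x y]. destruct df as [dx dy]. simpl in *. unfold opp; simpl. field. apply sqnz. intro E; apply Hn; nra.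
Qed.


Lemma Cder_pow f t df n : Cder f t df ->
  Cder (fun s => Cpow (f s) n) t (Cmult (Cmult (RtoC (INR n)) (Cpow (f t) (n - 1))) df).
Proof. intros H. induction n.
  - apply (Cder_eq _ _ (RtoC 0)). apply (Cder_ext (fun _ => RtoC 1)). intros; reflexivity. apply Cder_const. change (INR 0) with 0. ring.
  - apply (Cder_eq _ _ (Cplus (Cmult df (Cpow (f t) n)) (Cmult (f t) (Cmult (Cmult (RtoC (INR n)) (Cpow (f t) (n - 1))) df)))).
    apply (Cder_mult f (fun s => Cpow (f s) n)). exact H. exact IHn.
    destruct n. change (INR 0) with 0. change (INR 1) with 1. simpl Cpow. ring.
    replace (S (S n) - 1)%nat with (S n) by lia. replace (S n - 1)%nat with n by lia.
    rewrite (S_INR (S n)). rewrite RtoC_plus. change (Cpow (f t) (S n)) with (Cmult (f t) (Cpow (f t) n)). ring.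
Qed.

Lemma Cder_sum0 (h : nat -> R -> C) (dh : nat -> C) t N : (forall j, (j <= N)%nat -> Cder (h j) t (dh j)) ->
  Cder (fun s => Csum0 (fun j => h j s) N) t (Csum0 dh N).
Proof. induction N; intros H; cbn [Csum0]. apply H; lia.
  apply Cder_plus. apply IHN; intros; apply H; lia. apply H; lia. Qed.

Lemma Cder_exp t : Cder (fun s => RtoC (exp s)) t (RtoC (exp t)).
Proof. apply (Cder_RtoC exp). exact (is_derive_exp t). Qed.
Lemma Cder_expm t : Cder (fun s => RtoC (exp (- s))) t (RtoC (- exp (- t))).
Proof. apply (Cder_RtoC (fun s => exp (- s))).
  assert (H := is_derive_comp exp (fun s => - s) t (exp (- t)) (-1) (is_derive_exp (- t))).
  assert (H2 : is_derive (fun s : R => - s) t (-1)).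
  { apply (is_derive_opp (fun s : R => s) t 1). apply (is_derive_id t). }
  specialize (H H2). apply (isd_eq _ _ _ _ H). unfold scal; simpl. unfold mult; simpl. ring. Qed.

Lemma Cder_Derive_fst f t l : Cder f t l -> Derive (fun s => fst (f s)) t = fst l.
Proof. intros [H _]. apply is_derive_unique. exact H. Qed.
Lemma Cder_Derive_snd f t l : Cder f t l -> Derive (fun s => snd (f s)) t = snd l.
Proof. intros [_ H]. apply is_derive_unique. exact H. Qed.

Definition cH (a : R) : C := (1, - a).
Definition vH (a t : R) : C :=
  Cdiv (Cminus (Cmult (cH a) (RtoC (exp t))) (RtoC 1)) (Cplus (Cmult (cH a) (RtoC (exp t))) (RtoC 1)).

Lemma eiC_omega b a : eiC (omegaH b a) = Cmult (eiC b) (- a * muH a, muH a).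
Proof. unfold omegaH. rewrite !eiC_add. unfold eiC at 2 3. rewrite cos_atan, sin_atan, cos_PI2, sin_PI2.
  unfold muH, Rsqr. replace (1 + a * a) with (1 + a ^ 2) by ring.
  rewrite <- Cmult_assoc. f_equal. apply injective_projections; simpl; field; apply Rgt_not_eq, sqrt1a_pos. Qed.

Lemma tanh_half t : tanhR (t / 2) = (exp t - 1) / (exp t + 1).
Proof. unfold tanhR. replace (exp t) with (exp (t/2) * exp (t/2)) by (rewrite <- exp_plus; f_equal; field).
  rewrite exp_Ropp. pose proof (exp_pos (t/2)). field. nra. Qed.

Lemma div_cross (N D P Q : C) : D <> RtoC 0 -> Q <> RtoC 0 -> Cmult N Q = Cmult D P -> Cdiv N D = Cdiv P Q.
Proof. intros HD HQ E. transitivity (Cdiv (Cmult N Q) (Cmult D Q)). field; split; auto.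
  rewrite E. field; split; auto. Qed.

Lemma fst_neq (z : C) : fst z <> 0 -> z <> RtoC 0.
Proof. intros H E. apply H. rewrite E. reflexivity. Qed.

Lemma zH_eq b a t : zH b a t = Cplus (wH b a) (Cmult (Cmult (RtoC 2) (xiH b a)) (vH a t)).
Proof.
  unfold zH, wH, xiH, vH. rewrite eiC_omega. rewrite tanh_half.
  set (s := exp t). set (u := (s - 1) / (s + 1)). set (mu := muH a). set (x := eiC b).
  assert (Hs : 0 < s) by apply exp_pos.
  pose proof (muH_sq a) as Hmu. fold mu in Hmu.
  set (k := / (1 + a^2)).
  assert (Hk : mu ^ 2 = k) by (unfold k; assert (0 < 1 + a^2) by nra; apply (Rmult_eq_reg_r (1 + a^2)); [rewrite Hmu; field|]; lra).
  assert (EA : Cmult (RtoC (- a * mu)) (- a * mu, mu) = (a^2 * k, - a * k)) by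
    (rewrite <- Hk; apply injective_projections; simpl; ring).
  assert (EB : Cmult (Cmult (RtoC 2) (0, / 2 * mu)) (- a * mu, mu) = (- k, - a * k)) by
    (rewrite <- Hk; apply injective_projections; simpl; field).
  set (N := Cplus (Cmult (2, a) (RtoC u)) (0, a)).
  set (D := Cplus (Cmult (0, a) (RtoC u)) (-2, a)).
  set (Q := Cplus (Cmult (cH a) (RtoC s)) (RtoC 1)).
  set (P := Cplus (Cmult (a^2 * k, - a * k) Q) (Cmult (- k, - a * k) (Cminus (Cmult (cH a) (RtoC s)) (RtoC 1)))).
  assert (HD : D <> RtoC 0) by (apply fst_neq; unfold D; simpl; lra).
  assert (HQ : Q <> RtoC 0) by (apply fst_neq; unfold Q, cH; simpl; lra).
  assert (E : Cdiv N D = Cdiv P Q).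
  { apply div_cross; auto. unfold N, D, P, Q, cH, u, k. apply injective_projections; simpl; field; split; nra. }
  rewrite E. unfold P. rewrite <- EA, <- EB. field. auto.
Qed.

Lemma cs1_neq a s : 0 <= s -> Cplus (Cmult (cH a) (RtoC s)) (RtoC 1) <> RtoC 0.
Proof. intros H. apply fst_neq. unfold cH; simpl. lra. Qed.

Lemma vH_der a t : Cder (vH a) t (Cmult (RtoC (/2)) (Cminus (RtoC 1) (Cpow (vH a t) 2))).
Proof.
  pose proof (exp_pos t) as Hs.
  assert (Hnum : Cder (fun s => Cminus (Cmult (cH a) (RtoC (exp s))) (RtoC 1)) t (Cminus (Cmult (cH a) (RtoC (exp t))) (RtoC 0))).
  { apply Cder_minus. apply Cder_scal. apply Cder_exp. apply Cder_const. }
  assert (Hden : Cder (fun s => Cplus (Cmult (cH a) (RtoC (exp s))) (RtoC 1)) t (Cplus (Cmult (cH a) (RtoC (exp t))) (RtoC 0))).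
  { apply Cder_plus. apply Cder_scal. apply Cder_exp. apply Cder_const. }
  apply Cder_inv in Hden; [|apply cs1_neq; lra].
  pose proof (Cder_mult _ _ _ _ _ Hnum Hden) as H.
  eapply Cder_ext; [|eapply Cder_eq; [exact H|]].
  - intros s. unfold vH. reflexivity.
  - unfold vH. pose proof (cs1_neq a (exp t) ltac:(lra)) as Hn.
    set (cs := Cmult (cH a) (RtoC (exp t))) in *. simpl Cpow. replace (RtoC (/2)) with (Cinv (RtoC 2)) by (apply injective_projections; simpl; field). field. exact Hn.
Qed.

Lemma zH_der b a t : Cder (zH b a) t (Cmult (Cmult (RtoC 2) (xiH b a)) (Cmult (RtoC (/2)) (Cminus (RtoC 1) (Cpow (vH a t) 2)))).
Proof.
  eapply Cder_ext. intros s. symmetry. apply zH_eq.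
  eapply Cder_eq. apply Cder_plus. apply Cder_const. apply Cder_scal. apply vH_der. ring.
Qed.

Lemma zHdot_eq b a t : zHdot b a t = Cmult (xiH b a) (Cminus (RtoC 1) (Cpow (vH a t) 2)).
Proof.
  pose proof (zH_der b a t) as H. unfold zHdot.
  rewrite (Cder_Derive_fst _ _ _ H), (Cder_Derive_snd _ _ _ H).
  rewrite <- surjective_pairing. replace (RtoC (/2)) with (Cinv (RtoC 2)) by (apply injective_projections; simpl; field). field.
Qed.

Fixpoint bin (n k : nat) : nat :=
  match n, k with
  | _, O => 1%nat
  | O, S _ => 0%nat
  | S n', S k' => (bin n' k' + bin n' (S k'))%nat
  end.

Lemma bin_gt n k : (n < k)%nat -> bin n k = 0%nat.
Proof. revert k; induction n; intros [|k] H; simpl; try lia. rewrite !IHn by lia. auto. Qed.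

Definition pbin n j := match j with O => 0%nat | S j' => bin n j' end.
Lemma bin_S n j : bin (S n) j = (bin n j + pbin n j)%nat.
Proof. destruct j. destruct n; simpl; lia. change (bin (S n) (S j)) with (bin n j + bin n (S j))%nat. unfold pbin. lia. Qed.

Lemma Csum0_ext f g n : (forall j, (j <= n)%nat -> f j = g j) -> Csum0 f n = Csum0 g n.
Proof. induction n; simpl; intros H. apply H; lia. rewrite IHn by (intros; apply H; lia). rewrite H by lia. auto. Qed.
Lemma Csum0_plus f g n : Csum0 (fun j => Cplus (f j) (g j)) n = Cplus (Csum0 f n) (Csum0 g n).
Proof. induction n; simpl. auto. rewrite IHn. ring. Qed.
Lemma Csum0_scal s f n : Csum0 (fun j => Cmult s (f j)) n = Cmult s (Csum0 f n).
Proof. induction n; simpl. auto. rewrite IHn. ring. Qed.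
Lemma Csum0_first f n : Csum0 f (S n) = Cplus (f O) (Csum0 (fun j => f (S j)) n).
Proof. induction n. simpl. auto. change (Csum0 f (S (S n))) with (Cplus (Csum0 f (S n)) (f (S (S n)))).
  rewrite IHn. simpl. ring. Qed.
Lemma Csum0_zero n : Csum0 (fun _ => RtoC 0) n = RtoC 0.
Proof. induction n; simpl; auto. rewrite IHn; ring. Qed.
Lemma Csum0_prod f g n M : Cmult (Csum0 f n) (Csum0 g M) = Csum0 (fun j => Csum0 (fun l => Cmult (f j) (g l)) M) n.
Proof. induction n; simpl. rewrite Csum0_scal. auto. rewrite Cmult_plus_distr_r, IHn, Csum0_scal. reflexivity. Qed.

Lemma Csum0_S f n : Csum0 f (S n) = Cplus (Csum0 f n) (f (S n)).
Proof. reflexivity. Qed.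

Lemma Cbinom A B n : Cpow (Cplus A B) n =
  Csum0 (fun j => Cmult (Cmult (RtoC (INR (bin n j))) (Cpow A (n - j))) (Cpow B j)) n.
Proof.
  induction n. simpl. ring.
  change (Cpow (Cplus A B) (S n)) with (Cmult (Cplus A B) (Cpow (Cplus A B) n)). rewrite IHn.
  rewrite (Csum0_ext _ (fun j => Cplus (Cmult (Cmult (RtoC (INR (bin n j))) (Cpow A (S n - j))) (Cpow B j))
       (Cmult (Cmult (RtoC (INR (pbin n j))) (Cpow A (S n - j))) (Cpow B j))) (S n)).
  2:{ intros j Hj. rewrite bin_S, plus_INR, RtoC_plus. ring. }
  rewrite Csum0_plus. rewrite Cmult_plus_distr_r. f_equal.
  - rewrite Csum0_S. rewrite (bin_gt n (S n)) by lia. change (INR 0) with 0. rewrite <- Csum0_scal.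
    transitivity (Cplus (Csum0 (fun j => Cmult A (Cmult (Cmult (RtoC (INR (bin n j))) (Cpow A (n - j))) (Cpow B j))) n) (RtoC 0)).
    ring. f_equal; [|ring].
    apply Csum0_ext. intros j Hj. replace (S n - j)%nat with (S (n - j)) by lia. simpl Cpow. ring.
  - rewrite Csum0_first. change (INR (pbin n 0)) with 0. rewrite <- Csum0_scal.
    transitivity (Cplus (RtoC 0) (Csum0 (fun j => Cmult B (Cmult (Cmult (RtoC (INR (bin n j))) (Cpow A (n - j))) (Cpow B j))) n)).
    ring. f_equal. ring.
    apply Csum0_ext. intros j Hj. replace (S n - S j)%nat with (n - j)%nat by lia. simpl Cpow. simpl pbin. ring.
Qed.

Section Phi.
Variables (w xi : C) (n q : nat).

Definition Kc (j l : nat) : C :=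
  Cmult (Cmult (Cmult (Cmult (Cmult (RtoC 2) (Cpow xi q)) (RtoC (INR (bin n j)))) (Cpow w (n - j))) (Cpow (Cmult (RtoC 2) xi) j))
        (RtoC (INR (bin (q - 1) l) * (-1) ^ l / INR (j + 2 * l + 1))).

Definition Phi (V : C) : C :=
  Csum0 (fun j => Csum0 (fun l => Cmult (Kc j l) (Cpow V (j + 2 * l + 1))) (q - 1)) n.

Lemma Phi_der f t df : Cder f t df ->
  Cder (fun s => Phi (f s)) t
    (Csum0 (fun j => Csum0 (fun l => Cmult (Kc j l) (Cmult (Cmult (RtoC (INR (j + 2 * l + 1))) (Cpow (f t) (j + 2 * l + 1 - 1))) df)) (q - 1)) n).
Proof. intros H. unfold Phi. apply (Cder_sum0 (fun j s => Csum0 (fun l => Cmult (Kc j l) (Cpow (f s) (j + 2 * l + 1))) (q - 1))).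
  intros j _. apply (Cder_sum0 (fun l s => Cmult (Kc j l) (Cpow (f s) (j + 2 * l + 1)))).
  intros l _. apply (Cder_scal (Kc j l) (fun s => Cpow (f s) (j + 2 * l + 1))). apply Cder_pow. exact H. Qed.

Lemma Phi'_eq V d :
  Csum0 (fun j => Csum0 (fun l => Cmult (Kc j l) (Cmult (Cmult (RtoC (INR (j + 2 * l + 1))) (Cpow V (j + 2 * l + 1 - 1))) d)) (q - 1)) n
  = Cmult (Cmult (Cmult (Cmult (RtoC 2) (Cpow xi q)) (Cpow (Cplus w (Cmult (Cmult (RtoC 2) xi) V)) n))
      (Cpow (Cminus (RtoC 1) (Cpow V 2)) (q - 1))) d.
Proof.
  rewrite Cbinom. replace (Cminus (RtoC 1) (Cpow V 2)) with (Cplus (RtoC 1) (Cmult (RtoC (-1)) (Cpow V 2))) by ring.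
  rewrite Cbinom.
  match goal with |- _ = Cmult (Cmult (Cmult ?A ?S1) ?S2) ?D => 
    transitivity (Cmult D (Cmult A (Cmult S1 S2))); [|ring] end.
  rewrite Csum0_prod. rewrite <- !Csum0_scal.
  apply Csum0_ext. intros j Hj. rewrite <- !Csum0_scal. apply Csum0_ext. intros l Hl.
  unfold Kc. rewrite !Cpow_mult_distr, !Cpow_RtoC, pow1, <- Cpow_mul_exp.
  replace (j + 2 * l + 1 - 1)%nat with (j + 2 * l)%nat by lia. rewrite Cpow_add.
  assert (HI : INR (j + 2 * l + 1) <> 0) by (apply not_0_INR; lia).
  replace (RtoC (INR (bin (q - 1) l) * (-1) ^ l / INR (j + 2 * l + 1))) with
    (Cmult (RtoC (INR (bin (q - 1) l) * (-1) ^ l)) (Cinv (RtoC (INR (j + 2 * l + 1))))) by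
    (apply injective_projections; simpl; field; auto).
  rewrite RtoC_mult. field. apply fst_neq. simpl. auto.
Qed.

End Phi.

Lemma Cpow_pred U k : (1 <= k)%nat -> Cpow U k = Cmult U (Cpow U (k - 1)).
Proof. intros H. destruct k; [lia|]. simpl. replace (k - 0)%nat with k by lia. reflexivity. Qed.

Section Integral.
Variables (b a : R) (n q : nat).
Hypothesis Hq : (1 <= q)%nat.
Let w := wH b a.
Let xi := xiH b a.
Let H (t : R) : C := Phi w xi n q (vH a t).
Let g (t : R) : C := Cmult (Cpow (zH b a t) n) (Cpow (zHdot b a t) q).

Lemma H_der t : Cder H t (g t).
Proof.
  pose proof (Phi_der w xi n q (vH a) t _ (vH_der a t)) as D.
  eapply Cder_eq. exact D. rewrite Phi'_eq. unfold g. rewrite zH_eq, zHdot_eq. fold w xi.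
  rewrite Cpow_mult_distr.
  set (v := vH a t). set (U := Cminus (RtoC 1) (Cpow v 2)).
  replace (Cpow U q) with (Cmult U (Cpow U (q - 1))) by (symmetry; apply Cpow_pred; lia).
  replace (RtoC (/2)) with (Cinv (RtoC 2)) by (apply injective_projections; simpl; field).
  set (X := Cpow xi q). set (Y := Cpow U (q - 1)). set (Z := Cpow (Cplus w (Cmult (Cmult (RtoC 2) xi) v)) n).
  field.
Qed.

Lemma g_der_ex t : exists l, Cder g t l.
Proof.
  set (v := vH a). set (dv := fun t => Cmult (RtoC (/2)) (Cminus (RtoC 1) (Cpow (vH a t) 2))).
  assert (Dz : Cder (fun s => Cplus w (Cmult (Cmult (RtoC 2) xi) (v s))) t (Cplus (RtoC 0) (Cmult (Cmult (RtoC 2) xi) (dv t)))).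
  { apply Cder_plus. apply Cder_const. apply Cder_scal. apply vH_der. }
  assert (Dd : Cder (fun s => Cmult xi (Cminus (RtoC 1) (Cpow (v s) 2))) t
       (Cmult xi (Cminus (RtoC 0) (Cmult (Cmult (RtoC (INR 2)) (Cpow (v t) (2 - 1))) (dv t))))).
  { apply Cder_scal. apply Cder_minus. apply Cder_const. apply Cder_pow. apply vH_der. }
  pose proof (Cder_pow _ _ _ n Dz) as Pz. pose proof (Cder_pow _ _ _ q Dd) as Pd.
  pose proof (Cder_mult _ _ _ _ _ Pz Pd) as M.
  eexists. eapply Cder_ext; [|exact M]. intros s. unfold g. rewrite zH_eq, zHdot_eq. reflexivity.
Qed.

Lemma g_cont t : continuous (fun s => fst (g s)) t.
Proof. destruct (g_der_ex t) as [l [D _]]. exact (ex_derive_continuous (fun s => fst (g s)) t (ex_intro _ _ D)). Qed.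

Lemma Derive_H : forall t, Derive (fun s => fst (H s)) t = fst (g t).
Proof. intros t. apply (Cder_Derive_fst H t (g t) (H_der t)). Qed.
Lemma Derive_H2 : forall t, Derive (fun s => snd (H s)) t = snd (g t).
Proof. intros t. apply (Cder_Derive_snd H t (g t) (H_der t)). Qed.

Lemma g_cont2 t : continuous (fun s => snd (g s)) t.
Proof. destruct (g_der_ex t) as [l [_ D]]. exact (ex_derive_continuous (fun s => snd (g s)) t (ex_intro _ _ D)). Qed.

End Integral.

Definition Vm (a s : R) : C := Cdiv (Cminus (Cmult (cH a) (RtoC s)) (RtoC 1)) (Cplus (Cmult (cH a) (RtoC s)) (RtoC 1)).
Definition Vp (a s : R) : C := Cdiv (Cminus (cH a) (RtoC s)) (Cplus (cH a) (RtoC s)).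

Lemma vH_Vm a t : vH a t = Vm a (exp t).
Proof. reflexivity. Qed.

Lemma vH_Vp a t : vH a t = Vp a (exp (- t)).
Proof. unfold vH, Vp. pose proof (exp_pos t). rewrite exp_Ropp.
  apply div_cross.
  - apply cs1_neq. lra.
  - apply fst_neq. unfold cH; simpl. pose proof (Rinv_0_lt_compat _ H). lra.
  - unfold cH. apply injective_projections; simpl; field; lra.
Qed.

Lemma Cder_id t : Cder (fun s => RtoC s) t (RtoC 1).
Proof. apply (Cder_RtoC (fun s => s)). exact (is_derive_id t). Qed.

Lemma Vm_der a : exists l, Cder (Vm a) 0 l.
Proof.
  assert (Hnum : Cder (fun s => Cminus (Cmult (cH a) (RtoC s)) (RtoC 1)) 0 (Cminus (Cmult (cH a) (RtoC 1)) (RtoC 0))).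
  { apply Cder_minus. apply Cder_scal. apply Cder_id. apply Cder_const. }
  assert (Hden : Cder (fun s => Cplus (Cmult (cH a) (RtoC s)) (RtoC 1)) 0 (Cplus (Cmult (cH a) (RtoC 1)) (RtoC 0))).
  { apply Cder_plus. apply Cder_scal. apply Cder_id. apply Cder_const. }
  apply Cder_inv in Hden; [|apply cs1_neq; lra].
  eexists. exact (Cder_mult _ _ _ _ _ Hnum Hden).
Qed.

Lemma Vp_der a : exists l, Cder (Vp a) 0 l.
Proof.
  assert (Hnum : Cder (fun s => Cminus (cH a) (RtoC s)) 0 (Cminus (RtoC 0) (RtoC 1))).
  { apply Cder_minus. apply Cder_const. apply Cder_id. }
  assert (Hden : Cder (fun s => Cplus (cH a) (RtoC s)) 0 (Cplus (RtoC 0) (RtoC 1))).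
  { apply Cder_plus. apply Cder_const. apply Cder_id. }
  apply Cder_inv in Hden; [|apply fst_neq; unfold cH; simpl; lra].
  eexists. exact (Cder_mult _ _ _ _ _ Hnum Hden).
Qed.

Lemma Vm0 a : Vm a 0 = RtoC (-1).
Proof. unfold Vm. apply injective_projections; unfold cH; simpl; field. Qed.
Lemma Vp0 a : Vp a 0 = RtoC 1.
Proof. unfold Vp. assert (H : cH a <> RtoC 0) by (apply fst_neq; unfold cH; simpl; lra).
  replace (Cplus (cH a) (RtoC 0)) with (cH a) by ring. replace (Cminus (cH a) (RtoC 0)) with (cH a) by ring.
  field. auto. Qed.

Lemma lim_comp_fst (K : R -> C) l (phi : R -> R) F : Filter F -> Cder K 0 l -> filterlim phi F (locally 0) ->
  filterlim (fun t => fst (K (phi t))) F (locally (fst (K 0))).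
Proof. intros HF [D _] Hphi. apply (filterlim_comp R R R phi (fun s => fst (K s)) F (locally 0)). exact Hphi.
  exact (ex_derive_continuous (fun s => fst (K s)) 0 (ex_intro _ _ D)). Qed.
Lemma lim_comp_snd (K : R -> C) l (phi : R -> R) F : Filter F -> Cder K 0 l -> filterlim phi F (locally 0) ->
  filterlim (fun t => snd (K (phi t))) F (locally (snd (K 0))).
Proof. intros HF [_ D] Hphi. apply (filterlim_comp R R R phi (fun s => snd (K s)) F (locally 0)). exact Hphi.
  exact (ex_derive_continuous (fun s => snd (K s)) 0 (ex_intro _ _ D)). Qed.

Lemma exp_lim_m : filterlim exp (Rbar_locally m_infty) (locally 0).
Proof. exact is_lim_exp_m. Qed.
Lemma expm_lim_p : filterlim (fun t => exp (- t)) (Rbar_locally p_infty) (locally 0).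
Proof. apply (is_lim_comp exp (fun t => - t) p_infty 0 m_infty).
  exact is_lim_exp_m. exact (is_lim_opp (fun y => y) p_infty p_infty (is_lim_id p_infty)).
  exists 0. intros; discriminate. Qed.


Lemma IH_eq b a n q : (1 <= q)%nat ->
  IH n q b a = Cminus (Phi (wH b a) (xiH b a) n q (RtoC 1)) (Phi (wH b a) (xiH b a) n q (RtoC (-1))).
Proof.
  intros Hq. set (w := wH b a). set (xi := xiH b a).
  set (K := fun s => Phi w xi n q (s)).
  destruct (Vm_der a) as [lm Dm]. destruct (Vp_der a) as [lp Dp].
  pose proof (Phi_der w xi n q _ _ _ Dm) as DKm.
  pose proof (Phi_der w xi n q _ _ _ Dp) as DKp.
  assert (E1 : forall X Y : C, fst (Cminus X Y) = fst X - fst Y) by (intros [x1 x2] [y1 y2]; simpl; ring).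
  assert (E2 : forall X Y : C, snd (Cminus X Y) = snd X - snd Y) by (intros [x1 x2] [y1 y2]; simpl; ring).
  unfold IH. apply injective_projections; cbn [fst snd]; [rewrite E1|rewrite E2].
  - rewrite (functional_extensionality (fun t => fst (Cmult (Cpow (zH b a t) n) (Cpow (zHdot b a t) q)))
       (Derive (fun t => fst (Phi w xi n q (vH a t))))).
    2:{ intros t. symmetry. apply (Derive_H b a n q Hq t). }
    apply is_RInt_gen_unique. apply is_RInt_gen_Derive.
    + apply filter_forall. intros ab x _. exists (fst (Cmult (Cpow (zH b a x) n) (Cpow (zHdot b a x) q))).
      apply (H_der b a n q Hq x).
    + apply filter_forall. intros ab x _.
      apply (continuous_ext (fun t => fst (Cmult (Cpow (zH b a t) n) (Cpow (zHdot b a t) q)))).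
      intros t. symmetry. apply (Derive_H b a n q Hq t). apply (g_cont b a n q).
    + pose proof (lim_comp_fst (fun s => Phi w xi n q (Vm a s)) _ exp (Rbar_locally m_infty) _ DKm exp_lim_m) as L.
      cbv beta in L. rewrite Vm0 in L. exact L.
    + pose proof (lim_comp_fst (fun s => Phi w xi n q (Vp a s)) _ (fun t => exp (- t)) (Rbar_locally p_infty) _ DKp expm_lim_p) as L.
      cbv beta in L. rewrite Vp0 in L. eapply filterlim_ext; [|exact L]. intros t. simpl. rewrite vH_Vp. reflexivity.
  - rewrite (functional_extensionality (fun t => snd (Cmult (Cpow (zH b a t) n) (Cpow (zHdot b a t) q)))
       (Derive (fun t => snd (Phi w xi n q (vH a t))))).
    2:{ intros t. symmetry. apply (Derive_H2 b a n q Hq t). }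
    apply is_RInt_gen_unique. apply is_RInt_gen_Derive.
    + apply filter_forall. intros ab x _. exists (snd (Cmult (Cpow (zH b a x) n) (Cpow (zHdot b a x) q))).
      apply (H_der b a n q Hq x).
    + apply filter_forall. intros ab x _.
      apply (continuous_ext (fun t => snd (Cmult (Cpow (zH b a t) n) (Cpow (zHdot b a t) q)))).
      intros t. symmetry. apply (Derive_H2 b a n q Hq t). apply (g_cont2 b a n q).
    + pose proof (lim_comp_snd (fun s => Phi w xi n q (Vm a s)) _ exp (Rbar_locally m_infty) _ DKm exp_lim_m) as L.
      cbv beta in L. rewrite Vm0 in L. exact L.
    + pose proof (lim_comp_snd (fun s => Phi w xi n q (Vp a s)) _ (fun t => exp (- t)) (Rbar_locally p_infty) _ DKp expm_lim_p) as L.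
      cbv beta in L. rewrite Vp0 in L. eapply filterlim_ext; [|exact L]. intros t. simpl. rewrite vH_Vp. reflexivity.
Qed.

Lemma sum_zero0 (f : nat -> R) N : sum_f_R0 (fun l => f l * 0) N = 0.
Proof. induction N; simpl; [ring|]. rewrite IHN. ring. Qed.

Section PhiDiff.
Variables (w xi : C) (n q : nat).

Definition Aj (j : nat) : C :=
  Cmult (Cmult (Cmult (Cmult (RtoC 2) (Cpow xi q)) (RtoC (INR (bin n j)))) (Cpow w (n - j))) (Cpow (Cmult (RtoC 2) xi) j).
Definition cjl (j l : nat) : R := INR (bin (q - 1) l) * (-1) ^ l / INR (j + 2 * l + 1).
Definition mj (j : nat) : R := sum_f_R0 (fun l => cjl j l * (1 + (-1) ^ j)) (q - 1).

Lemma Csum0_RtoC (f : nat -> R) N : Csum0 (fun l => RtoC (f l)) N = RtoC (sum_f_R0 f N).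
Proof. induction N; simpl; auto. rewrite IHN, RtoC_plus. auto. Qed.

Lemma Phi_diff : Cminus (Phi w xi n q (RtoC 1)) (Phi w xi n q (RtoC (-1))) =
  Csum0 (fun j => Cmult (Aj j) (RtoC (mj j))) n.
Proof.
  unfold Phi. unfold Cminus.
  replace (Copp (Csum0 (fun j => Csum0 (fun l => Cmult (Kc w xi n q j l) (Cpow (RtoC (-1)) (j + 2 * l + 1))) (q - 1)) n))
    with (Cmult (RtoC (-1)) (Csum0 (fun j => Csum0 (fun l => Cmult (Kc w xi n q j l) (Cpow (RtoC (-1)) (j + 2 * l + 1))) (q - 1)) n)) by ring.
  rewrite <- Csum0_scal, <- Csum0_plus. apply Csum0_ext. intros j Hj.
  rewrite <- Csum0_scal, <- Csum0_plus. unfold mj. rewrite <- Csum0_RtoC, <- Csum0_scal. apply Csum0_ext. intros l Hl.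
  unfold Kc. fold (Aj j). fold (cjl j l). rewrite !Cpow_RtoC, pow1.
  replace ((-1) ^ (j + 2 * l + 1)) with (- (-1) ^ j) by (rewrite !pow_add, pow_1_even; simpl; ring).
  rewrite !RtoC_mult, RtoC_plus. replace (RtoC (- (-1) ^ j)) with (Copp (RtoC ((-1) ^ j))) by
    (apply injective_projections; simpl; ring). ring.
Qed.

Lemma mj_odd j : Nat.Odd j -> mj j = 0.
Proof. intros [k ->]. unfold mj. replace (1 + (-1) ^ (2 * k + 1)) with 0 by (rewrite pow_add, pow_1_even; simpl; ring).
  apply sum_zero0. Qed.

End PhiDiff.

Lemma fst_Csum0 f N : fst (Csum0 f N) = sum_f_R0 (fun l => fst (f l)) N.
Proof. induction N; simpl; auto. rewrite IHN. auto. Qed.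

Lemma S_pos M : 0 < sum_f_R0 (fun l => INR (bin M l) * (-1) ^ l / INR (0 + 2 * l + 1)) M.
Proof.
  set (c := fun l => INR (bin M l) * (-1) ^ l / INR (0 + 2 * l + 1)).
  set (P := fun s => Csum0 (fun l => Cmult (RtoC (c l)) (Cpow (RtoC s) (0 + 2 * l + 1))) M).
  assert (D : forall s, Cder P s (RtoC ((1 - s ^ 2) ^ M))).
  { intros s. eapply Cder_eq.
    apply (Cder_sum0 (fun l s => Cmult (RtoC (c l)) (Cpow (RtoC s) (0 + 2 * l + 1)))).
    intros l _. apply (Cder_scal (RtoC (c l)) (fun s => Cpow (RtoC s) (0 + 2 * l + 1))). apply Cder_pow. apply Cder_id.
    replace (1 - s^2) with (1 + (- s^2)) by ring. rewrite <- Cpow_RtoC, RtoC_plus, Cbinom.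
    apply Csum0_ext. intros l Hl. unfold c. rewrite !Cpow_RtoC, pow1.
    replace (0 + 2 * l + 1 - 1)%nat with (2 * l)%nat by lia.
    assert (HI : INR (0 + 2 * l + 1) <> 0) by (apply not_0_INR; lia).
    replace ((- s^2) ^ l) with ((-1) ^ l * s ^ (2 * l)) by (rewrite pow_mult, <- Rpow_mult_distr; f_equal; ring).
    rewrite <- !RtoC_mult. f_equal. field. auto. }
  assert (Hm : forall x, derivable_pt_lim (fun s => fst (P s)) x ((1 - x^2)^M)).
  { intros x. apply is_derive_Reals. destruct (D x) as [D1 _]. exact D1. }
  destruct (MVT_cor2 (fun s => fst (P s)) (fun x => (1 - x^2)^M) 0 1 Rlt_0_1 (fun c _ => Hm c)) as [x [E Hx]].
  assert (P0 : fst (P 0) = 0).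
  { unfold P. rewrite fst_Csum0. rewrite (sum_eq _ (fun l => c l * 0)). apply sum_zero0. intros l _. rewrite Cpow_RtoC, pow_i by lia. simpl. ring. }
  assert (P1 : fst (P 1) = sum_f_R0 c M).
  { unfold P. rewrite fst_Csum0. apply sum_eq. intros l _. rewrite Cpow_RtoC, pow1. simpl. ring. }
  rewrite P0, P1 in E. assert (Hp : 0 < (1 - x^2)^M) by (apply pow_lt; nra). fold c. nra.
Qed.

Lemma Csum0_minus0 f n : Cminus (Csum0 f n) (f O) = Csum0 (fun j => match j with O => RtoC 0 | _ => f j end) n.
Proof. induction n; simpl. ring. rewrite <- IHn. ring. Qed.

Lemma bin_n0 n : bin n 0 = 1%nat.
Proof. destruct n; reflexivity. Qed.

Lemma mj0_pos q : (1 <= q)%nat -> 0 < mj q 0.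
Proof. intros Hq. unfold mj. pose proof (S_pos (q - 1)) as H.
  rewrite <- scal_sum. unfold cjl. simpl pow. nra. Qed.

Section F2F3.
Variable r : nat.
Let m := Nat.div r 2.
Definition F3f (p : nat) (b a : R) : C := Cmult (Cpow (xiH b a) (2 * p)) (Cpow (wH b a) (r - 2 * p)).
Definition F2f (p : nat) (b a : R) : C := IH (r - 2 * p) (2 * p) b a.

Lemma F2_tri : forall p, (1 <= p <= m)%nat -> exists d, d <> RtoC 0 /\
  spanR (fun k x => F3f k (fst x) (snd x)) (S p) m (fun x => Cminus (F2f p (fst x) (snd x)) (Cmult d (F3f p (fst x) (snd x)))).
Proof.
  pose proof (div2_facts r) as Hd. fold m in Hd.
  intros p Hp. set (n := (r - 2 * p)%nat). set (q := (2 * p)%nat).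
  exists (RtoC (2 * mj q 0)). split.
  { intros E. apply (f_equal fst) in E. simpl in E. pose proof (mj0_pos q ltac:(unfold q; lia)). lra. }
  apply (span_ext _ _ _ (fun x => Csum0 (fun j => match j with O => RtoC 0 | _ =>
      Cmult (Aj (wH (fst x) (snd x)) (xiH (fst x) (snd x)) n q j) (RtoC (mj q j)) end) n)).
  { intros [b a]. cbn [fst snd]. rewrite <- Csum0_minus0. unfold F2f. fold n q. rewrite IH_eq by (unfold q; lia).
    rewrite Phi_diff. f_equal. unfold Aj, F3f. fold n q. rewrite bin_n0, Nat.sub_0_r. simpl Cpow at 2.
    change (INR 1) with 1. rewrite RtoC_mult. ring. }
  apply span_sum0. intros j Hj. destruct j as [|j']; [apply span_zero|].
  destruct (Nat.Even_or_Odd (S j')) as [[i Hi]|Ho].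
  - rewrite Hi. assert (1 <= i)%nat by lia.
    apply (span_ext _ _ _ (fun x => Cmult (RtoC (2 * INR (bin n (2 * i)) * 2 ^ (2 * i) * mj q (2 * i))) (F3f (p + i) (fst x) (snd x)))).
    { intros [b a]. cbn [fst snd]. unfold Aj, F3f. rewrite Cpow_mult_distr, !Cpow_RtoC.
      replace (2 * (p + i))%nat with (q + 2 * i)%nat by (unfold q; lia). rewrite Cpow_add.
      replace (r - (q + 2 * i))%nat with (n - 2 * i)%nat by (unfold n, q; lia).
      rewrite !RtoC_mult. ring. }
    apply span_scal. apply (span_gen (fun k x => F3f k (fst x) (snd x))); lia.
  - rewrite mj_odd by auto. apply (span_ext _ _ _ (fun _ => RtoC 0)). intros; ring. apply span_zero.
Qed.

Lemma F2_F3_equiv : forall f, in_span F2f m f <-> in_span F3f m f.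
Proof.
  apply span_equiv.
  - intros p Hp. destruct (F2_tri p Hp) as [d [Hd Hs]].
    apply (span_ext _ _ _ (fun x => Cplus (Cminus (F2f p (fst x) (snd x)) (Cmult d (F3f p (fst x) (snd x))))
        (Cmult d (F3f p (fst x) (snd x))))). intros; ring.
    apply span_add. eapply span_mono; [| |exact Hs]; lia. apply span_scal. apply (span_gen (fun k x => F3f k (fst x) (snd x))); lia.
  - intros p Hp. eapply span_mono; [| |apply (tri_upper _ _ m F2_tri p Hp)]; lia.
Qed.

End F2F3.

Theorem lemma4p9 (r : nat) (pn : nat -> R -> R) :
  (2 <= r)%nat -> normalized_cheb pn ->
  let m := Nat.div r 2 in
  let F1 := fun p beta a => psi0H pn (r - 2 * p) (- Z.of_nat p) beta a in
  let F2 := fun p beta a => IH (r - 2 * p) (2 * p) beta a in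
  let F3 := fun p beta a => Cmult (Cpow (xiH beta a) (2 * p)) (Cpow (wH beta a) (r - 2 * p)) in
  let F4 := fun p beta a =>
    Cmult (Cpow (xiH beta a) 2)
      (Cmult (Cpow (wH beta a) (r - 2 * p))
             (Cpow (Cminus (Cpow (wH beta a) 2) (Cmult (RtoC 4) (Cpow (xiH beta a) 2))) (p - 1))) in
  (forall f, in_span F1 m f <-> in_span F2 m f) /\
  (forall f, in_span F1 m f <-> in_span F3 m f) /\
  (forall f, in_span F1 m f <-> in_span F4 m f).
Proof.
  intros Hr Hn m F1 F2 F3 F4.
  pose proof (div2_facts r) as Hd. fold m in Hd.
  assert (E1 : forall f, in_span F1 m f <-> in_span (Gf r) m f).
  { apply (equiv_upper r F1 (fun k t => RtoC ((1 - t ^ 2) * pn (r - 2 * k)%nat t))).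
    - intros k b a Hk. unfold F1. apply F1_form. lia.
    - apply f1_tri. exact Hn. }
  assert (E3 : forall f, in_span F3 m f <-> in_span (Gf r) m f).
  { apply (equiv_lower r F3 (f3r r)).
    - intros k b a Hk. unfold F3. apply F3_form. lia.
    - apply f3_tri. }
  assert (E4 : forall f, in_span F4 m f <-> in_span (Gf r) m f).
  { apply (equiv_lower r F4 (f4r r)).
    - intros k b a Hk. unfold F4. apply F4_form; lia.
    - apply f4_diag. }
  assert (E2 : forall f, in_span F2 m f <-> in_span F3 m f) by apply (F2_F3_equiv r).
  split; [|split]; intros f.
  - rewrite E1, E2, E3. tauto.
  - rewrite E1, E3. tauto.
  - rewrite E1, E4. tauto.
Qed.
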